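(* Every Kan fibration of simplicial sets is a Skvortsov–Shehtman fibration; in particular, every Kan complex is a Skvortsov–Shehtman complex.
   Context: For $n>1$ and $0\le p<q\le n$, the $(p,q)$-th rhombus $R_{p,q}[n]\subseteq\Delta[n]$ is the union of the $p$-th and $q$-th faces of the standard simplex $\Delta[n]$. A simplicial map $f:E\to B$ is a Skvortsov–Shehtman fibration if for all $n>1$, $0\le p<q\le n$, every commutative square with top map $R_{p,q}[n]\to E$, left map the inclusion $R_{p,q}[n]\hookrightarrow\Delta[n]$, right map $f$ and bottom map $\Delta[n]\to B$ admits a diagonal filler $\Delta[n]\to E$ making both triangles commute. A simplicial set $S$ is a Skvortsov–Shehtman complex if $S\to *$ is a Skvortsov–Shehtman fibration. Kan fibrations are maps with the right lifting property against all horn inclusions $\Lambda_p[n]\hookrightarrow\Delta[n]$, $n>0$, $0\le p\le n$. *)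

(* Defs.v *)
From mathcomp Require Import all_boot.
Unset Printing Implicit Defensive.

(* Morphisms [m] -> [n] of the simplex category: monotone maps
   {0..m} -> {0..n}. *)
Definition monob m n (f : {ffun 'I_m.+1 -> 'I_n.+1}) : bool :=
  [forall i : 'I_m.+1, forall j : 'I_m.+1, (i <= j) ==> (f i <= f j)].

Arguments monob {m n} f.

Definition Hom m n := {f : {ffun 'I_m.+1 -> 'I_n.+1} | monob f}.

Lemma monob_id n : monob [ffun i : 'I_n.+1 => i].
Proof. by apply/forallP=> i; apply/forallP=> j; rewrite !ffunE; apply/implyP. Qed.

Definition idH n : Hom n n := exist (@monob n n) _ (monob_id n).

Lemma monob_comp {k m n} (f : Hom m n) (g : Hom k m) :
  monob [ffun x => sval f (sval g x)].
Proof.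
case: f g => [f Hf] [g Hg] /=.
apply/forallP=> i; apply/forallP=> j; rewrite !ffunE; apply/implyP=> ij.
have gij : g i <= g j by move/forallP: Hg => /(_ i) /forallP /(_ j) /implyP; apply.
by move/forallP: Hf => /(_ (g i)) /forallP /(_ (g j)) /implyP; apply.
Qed.

Definition compH {k m n} (f : Hom m n) (g : Hom k m) : Hom k n :=
  exist (@monob k n) _ (monob_comp f g).

Record sSet := SSet {
  ob :> nat -> Type;
  act : forall m n, Hom m n -> ob n -> ob m;
  act_id : forall n (x : ob n), act n n (idH n) x = x;
  act_comp : forall k m n (f : Hom m n) (g : Hom k m) (x : ob n),
      act k n (compH f g) x = act k m g (act m n f x)
}.
Arguments act {s m n} f x.

Record sSetMap (X Y : sSet) := SSetMap {
  mapf :> forall n : nat, X n -> Y n;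
  map_nat : forall m n (f : Hom m n) (x : X n),
      mapf m (act f x) = act f (mapf n x)
}.
Arguments mapf {X Y} s n x.
Arguments map_nat {X Y} s m n f x.

Lemma Delta_id {n m} (s : Hom m n) : compH s (idH m) = s.
Proof. by case: s => s Hs; apply/val_inj/ffunP=> i /=; rewrite !ffunE. Qed.

Lemma Delta_comp {n k m l} (f : Hom m l) (g : Hom k m) (s : Hom l n) :
  compH s (compH f g) = compH (compH s f) g.
Proof. by apply/val_inj/ffunP=> i /=; rewrite !ffunE. Qed.

Definition Delta (n : nat) : sSet :=
  @SSet (fun m => Hom m n) (fun m l f s => compH s f)
        (fun m s => Delta_id s) (fun k m l f g s => Delta_comp f g s).

Definition pt : sSet :=
  @SSet (fun _ => unit) (fun _ _ _ x => x) (fun _ _ => erefl) (fun _ _ _ _ _ _ => erefl).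

Definition to_pt (X : sSet) : sSetMap X pt :=
  @SSetMap X pt (fun _ _ => tt) (fun _ _ _ _ => erefl).

(* A simplicial subset A of Delta[n] is given by a predicate on simplices
   (closed under the action).  A map A -> X is a family of simplices indexed
   by the simplices of A, compatible with the action. *)
Definition subpred n := forall m, pred (Hom m n).

Definition sub_map {n} (A : subpred n) (X : sSet) :=
  { u : forall m (s : Hom m n), A m s -> X m |
    forall k m (g : Hom k m) (s : Hom m n) (h : A m s) (h' : A k (compH s g)),
      u k (compH s g) h' = act g (u m s h) }.

Definition rlp {n} (A : subpred n) {E B : sSet} (f : sSetMap E B) : Prop :=
  forall (u : sub_map A E) (b : sSetMap (Delta n) B),
    (forall m (s : Hom m n) (h : A m s), f m (sval u m s h) = b m s) ->
    exists l : sSetMap (Delta n) E,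
      (forall m (s : Hom m n) (h : A m s), l m s = sval u m s h) /\
      (forall m (s : Hom m n), f m (l m s) = b m s).

(* [s] misses the vertex i, i.e. s lies in the i-th face of Delta[n]. *)
Definition misses {m n} (s : Hom m n) (i : nat) : bool :=
  [forall j : 'I_m.+1, nat_of_ord (sval s j) != i].

Definition horn n (p : nat) : subpred n :=
  fun m s => [exists i : 'I_n.+1, (nat_of_ord i != p) && misses s i].

Definition rhombus n (p q : nat) : subpred n :=
  fun m s => misses s p || misses s q.

Definition KanFibration {E B : sSet} (f : sSetMap E B) : Prop :=
  forall n p, 0 < n -> p <= n -> rlp (horn n p) f.

Definition SSFibration {E B : sSet} (f : sSetMap E B) : Prop :=
  forall n p q, 1 < n -> p < q -> q <= n -> rlp (rhombus n p q) f.

Definition KanComplex (S : sSet) : Prop := KanFibration (to_pt S).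
Definition SSComplex (S : sSet) : Prop := SSFibration (to_pt S).

(* Main.v *)
Require Import Defs.
From mathcomp Require Import all_boot.
From mathcomp Require Import zify.
Import Defs.

Lemma compH_idl m n (s : Hom m n) : compH (idH n) s = s.
Proof. by case: s => s Hs; apply/val_inj/ffunP=> i /=; rewrite !ffunE. Qed.

Lemma compHA k l m n (f : Hom m n) (g : Hom l m) (h : Hom k l) :
  compH f (compH g h) = compH (compH f g) h.
Proof. by apply/val_inj/ffunP=> i /=; rewrite !ffunE. Qed.

Definition fill {E B : sSet} (f : sSetMap E B) (n : nat) (A : subpred n) : Prop :=
  forall (u : sub_map A E) (beta : B n),
    (forall m s h, f m (sval u m s h) = act s beta) ->
    exists e : E n, f n e = beta /\ forall m s h, act s e = sval u m s h.

Lemma uE n (A : subpred n) X (u : sub_map A X) m (s s' : Hom m n) h h' :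
  s = s' -> sval u m s h = sval u m s' h'.
Proof. by move=> Es; subst s'; rewrite (bool_irrelevance h h'). Qed.

Definition yon (X : sSet) n (x : X n) : sSetMap (Delta n) X :=
  @SSetMap (Delta n) X (fun m s => act s x)
    (fun m l g s => act_comp X m l n s g x).

Lemma rlp_fill E B (f : sSetMap E B) n (A : subpred n) : rlp A f -> fill f n A.
Proof.
move=> H u beta Hb.
have [l [Hl1 Hl2]] := H u (@yon B n beta) Hb.
exists (l n (idH n)); split.
  by rewrite Hl2 /= act_id.
move=> m s h; rewrite -Hl1 -map_nat /=; congr (l m _); exact: compH_idl.
Qed.

Lemma fill_rlp E B (f : sSetMap E B) n (A : subpred n) : fill f n A -> rlp A f.
Proof.
move=> H u b Hb.
have Hb' : forall m s h, f m (sval u m s h) = act s (b n (idH n)).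
  by move=> m s h; rewrite Hb -map_nat /= compH_idl.
have [e [He1 He2]] := H u _ Hb'.
exists (@yon E n e); split => //= m s.
by rewrite map_nat He1 -map_nat /= compH_idl.
Qed.

Lemma fill_ext E B (f : sSetMap E B) n (A A' : subpred n) :
  (forall m s, A m s = A' m s) -> fill f n A -> fill f n A'.
Proof.
move=> HA H u beta Hb.
have tr : forall m s, A m s -> A' m s by move=> m s; rewrite HA.
pose v := fun m s (h : A m s) => sval u m s (tr m s h).
have Hv : forall k m (g : Hom k m) (s : Hom m n) (h : A m s) (h' : A k (compH s g)),
    v k (compH s g) h' = act g (v m s h).
  move=> k m g s h h'; exact: (proj2_sig u k m g s (tr m s h) (tr _ _ h')).
have [e [He1 He2]] := H (exist _ v Hv) beta (fun m s h => Hb m s (tr m s h)).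
exists e; split => // m s h.
have h0 : A m s by rewrite HA.
by rewrite (He2 m s h0) /= /v; apply: uE.
Qed.

Definition gl n (A : subpred n) X (u : sub_map A X) (v : forall m, Hom m n -> X m)
  m (s : Hom m n) : X m :=
  (if A m s as b return (A m s = b -> X m) then fun H => sval u m s H
   else fun _ => v m s) erefl.

Arguments gl {n A X} u v m s.

Lemma glT n (A : subpred n) X (u : sub_map A X) v m s (h : A m s) :
  gl u v m s = sval u m s h.
Proof.
have: forall (b : bool) (e : A m s = b),
    (if b as b' return (A m s = b' -> X m) then fun H => sval u m s H
     else fun _ => v m s) e = sval u m s h.
  case=> e; first exact: uE.
  by exfalso; have := h; rewrite e.
exact.
Qed.

Lemma glF n (A : subpred n) X (u : sub_map A X) v m s : ~~ A m s ->
  gl u v m s = v m s.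
Proof.
move=> h.
have: forall (b : bool) (e : A m s = b),
    (if b as b' return (A m s = b' -> X m) then fun H => sval u m s H
     else fun _ => v m s) e = v m s.
  by case=> e //; exfalso; move: h; rewrite e.
exact.
Qed.
Arguments glT {n A X} u v {m s} h.
Arguments glF {n A X} u v {m s} _.

Definition U n (S : pred nat) : subpred n :=
  fun m s => [exists i : 'I_n.+1, S i && misses s i].

Lemma misses_comp k m n (s : Hom m n) (g : Hom k m) i :
  misses s i -> misses (compH s g) i.
Proof. by move/forallP=> H; apply/forallP=> a /=; rewrite ffunE; exact: H. Qed.

Lemma U_comp n S k m (s : Hom m n) (g : Hom k m) :
  U n S m s -> U n S k (compH s g).
Proof.
by case/existsP=> i /andP [Si Mi]; apply/existsP; exists i; rewrite Si misses_comp.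
Qed.

Lemma monob_delta n' (j : 'I_n'.+2) : monob [ffun i : 'I_n'.+1 => lift j i].
Proof.
apply/forallP=> a; apply/forallP=> b; rewrite !ffunE; apply/implyP=> ab.
by rewrite /= leq_bump2.
Qed.

Definition delta n' (j : 'I_n'.+2) : Hom n' n'.+1 := exist (@monob _ _) _ (monob_delta n' j).
Arguments delta {n'} j.

Lemma unbump_mono j a b : a <= b -> unbump j a <= unbump j b.
Proof. rewrite /unbump; case: (ltnP j a); case: (ltnP j b) => /=; lia. Qed.

Lemma monob_retr n' (j : nat) :
  monob [ffun i : 'I_n'.+2 => (inord (minn (unbump j i) n') : 'I_n'.+1)].
Proof.
apply/forallP=> a; apply/forallP=> b; rewrite !ffunE; apply/implyP=> ab.
rewrite !inordK ?ltnS ?geq_minr //.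
have := unbump_mono j _ _ ab; lia.
Qed.

Definition retr n' (j : nat) : Hom n'.+1 n' := exist (@monob _ _) _ (monob_retr n' j).

Lemma unbump_le n' (j : 'I_n'.+2) (v : 'I_n'.+2) : nat_of_ord v != j ->
  unbump j v <= n'.
Proof.
move=> vj; have := ltn_ord v; have := ltn_ord j; move: vj; rewrite /unbump.
case: (ltnP j v) => /=; lia.
Qed.

Lemma dr m n' (j : 'I_n'.+2) (s : Hom m n'.+1) : misses s j ->
  compH (delta j) (compH (retr n' j) s) = s.
Proof.
move/forallP=> Hs; apply/val_inj/ffunP=> a; rewrite /= !ffunE; apply/val_inj => /=.
have Ha := Hs a.
rewrite inordK ?ltnS ?geq_minr //.
have -> : minn (unbump j (sval s a)) n' = unbump j (sval s a).
  by apply/minn_idPl; exact: unbump_le.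
by rewrite unbumpK //= inE.
Qed.

Lemma delta_miss m n' (j : 'I_n'.+2) (t : Hom m n') i :
  misses t i -> misses (compH (delta j) t) (bump j i).
Proof.
move/forallP=> H; apply/forallP=> a /=; rewrite !ffunE /=.
by have := H a; apply: contra => /eqP /(can_inj (bumpK j)) ->.
Qed.

Lemma delta_miss_inv m n' (j : 'I_n'.+2) (t : Hom m n') i :
  i != j -> misses (compH (delta j) t) i -> misses t (unbump j i).
Proof.
move=> ij /forallP H; apply/forallP=> a.
have := H a; rewrite /= !ffunE /=; apply: contra => /eqP ->.
by rewrite unbumpK // inE.
Qed.
Set Implicit Arguments. Unset Strict Implicit.

Lemma U_delta m n' (S : pred nat) (j : 'I_n'.+2) (t : Hom m n') :
  U n' (fun i => S (bump j i)) m t -> U n'.+1 S m (compH (delta j) t).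
Proof.
case/existsP=> i /andP [Si Mi]; apply/existsP; exists (lift j i).
by rewrite /= Si delta_miss.
Qed.

Lemma missj m n (S : pred nat) (j : nat) (s : Hom m n) :
  U n (fun i => S i || (i == j)) m s -> ~~ U n S m s -> misses s j.
Proof.
case/existsP=> i /andP [/orP [Si|/eqP ij] Mi] nU.
  by exfalso; move/negP: nU; apply; apply/existsP; exists i; rewrite Si.
by rewrite -ij.
Qed.

Lemma glue_step E B (f : sSetMap E B) n' (S : pred nat) (j : 'I_n'.+2) :
  ~~ S j ->
  fill f n' (U n' (fun i => S (bump j i))) ->
  fill f n'.+1 (U n'.+1 (fun i => S i || (i == j))) ->
  fill f n'.+1 (U n'.+1 S).
Proof.
move=> Sj H1 H2 u beta Hb.
pose w := fun m (t : Hom m n') (h : U n' (fun i => S (bump j i)) m t) =>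
  sval u m (compH (delta j) t) (U_delta h).
have Hw : forall k m (g : Hom k m) (t : Hom m n')
    (h : U n' (fun i => S (bump j i)) m t) (h' : U n' (fun i => S (bump j i)) k (compH t g)),
    w k (compH t g) h' = act g (w m t h).
  move=> k m g t h h'; rewrite /w -(proj2_sig u k m g _ (U_delta h) (@U_comp _ _ _ _ _ g (U_delta h))).
  by apply: uE; rewrite compHA.
pose uw : sub_map (U n' (fun i => S (bump j i))) E := exist _ w Hw.
have Hwb : forall m t h, f m (sval uw m t h) = act t (act (delta j) beta).
  by move=> m t h; rewrite /= /w Hb -act_comp.
have [x [Hx1 Hx2]] := H1 uw _ Hwb.
pose v := fun m (s : Hom m n'.+1) => act (compH (retr n' j) s) x.
pose A' := U n'.+1 (fun i => S i || (i == j)).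
have Hu' : forall k m (g : Hom k m) (s : Hom m n'.+1) (h : A' m s) (h' : A' k (compH s g)),
    gl u v k (compH s g) = act g (gl u v m s).
  move=> k m g s h h'.
  case: (boolP (U n'.+1 S m s)) => hs.
    have hsg := @U_comp _ _ _ _ _ g hs.
    by rewrite (glT _ _ hs) (glT _ _ hsg); apply: (proj2_sig u).
  have sj := missj h hs.
  rewrite (glF _ _ hs).
  case: (boolP (U n'.+1 S k (compH s g))) => hsg; last first.
    by rewrite glF // /v -act_comp compHA.
  rewrite (glT _ _ hsg) /v -act_comp -compHA.
  have sgj : misses (compH s g) j by apply: misses_comp.
  set t := compH (retr n' j) (compH s g).
  have ht : U n' (fun i => S (bump j i)) k t.
    case/existsP: hsg => i /andP [Si Mi].
    have ij : nat_of_ord i != j by apply: contraNneq Sj => <-.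
    apply/existsP; exists (inord (unbump j i)).
    rewrite inordK; last by rewrite ltnS; apply: unbump_le.
    rewrite unbumpK ?inE // Si /=.
    by apply: delta_miss_inv => //; rewrite /t dr.
  by rewrite (Hx2 k t ht) /= /w; apply: uE; rewrite /t dr.
pose u' : sub_map A' E := exist _ (fun m s (_ : A' m s) => gl u v m s) Hu'.
have Hub : forall m (s : Hom m n'.+1) (h : A' m s),
    f m (sval u' m s h) = act s beta.
  move=> m s h /=.
  case: (boolP (U n'.+1 S m s)) => hs; first by rewrite glT Hb.
  rewrite glF // /v map_nat Hx1 -act_comp dr //.
  exact: missj h hs.
have [e [He1 He2]] := H2 _ _ Hub.
exists e; split => // m s h.
have h' : A' m s.
  case/existsP: h => i /andP [Si Mi]; apply/existsP; exists i; by rewrite Si.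
by rewrite (He2 m s h') /= glT.
Qed.

Lemma fill_U E B (f : sSetMap E B) : KanFibration f ->
  forall n (S : pred nat), (exists i : 'I_n.+1, S i) ->
  (exists k : 'I_n.+1, ~~ S k) -> 0 < n -> fill f n (U n S).
Proof.
move=> Kan n; elim: n => [|n' IHn] S Hi Hk Hn //.
suff: forall c (S : pred nat), #|[set i : 'I_n'.+2 | ~~ S i]| <= c ->
    (exists i : 'I_n'.+2, S i) -> (exists k : 'I_n'.+2, ~~ S k) ->
    fill f n'.+1 (U n'.+1 S).
  by move/(_ _ S (leqnn _) Hi Hk).
clear S Hi Hk Hn.
elim=> [|c IHc] S Hc [i0 Si0] [k Sk].
  have kin : k \in [set i : 'I_n'.+2 | ~~ S i] by rewrite inE.
  by move: Hc; rewrite leqn0 cards_eq0 => /eqP E0; rewrite E0 inE in kin.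
case: (pickP [pred j : 'I_n'.+2 | ~~ S j && (j != k)]) => [j /andP [Sj jk] | none].
  apply: (glue_step Sj).
    have i0j : nat_of_ord i0 != j by apply: contraNneq Sj => <-.
    have kj : nat_of_ord k != j by rewrite eq_sym.
    have i0k : nat_of_ord i0 != k by apply: contraNneq Sk => <-.
    apply: IHn.
    - exists (inord (unbump j i0)).
      by rewrite inordK ?ltnS ?unbump_le // unbumpK ?inE.
    - exists (inord (unbump j k)).
      by rewrite inordK ?ltnS ?unbump_le // unbumpK ?inE.
    - move: i0j kj i0k; have := ltn_ord i0; have := ltn_ord j; have := ltn_ord k.
      lia.
  apply: IHc.
  - have -> : [set i : 'I_n'.+2 | ~~ (S i || (nat_of_ord i == j))] =
              [set i : 'I_n'.+2 | ~~ S i] :\ j.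
      apply/setP=> i; by rewrite !inE negb_or andbC.
    move: Hc; rewrite (cardsD1 j [set i : 'I_n'.+2 | ~~ S i]) inE Sj.
    by rewrite add1n ltnS.
  - by exists i0; rewrite Si0.
  - by exists k; rewrite negb_or Sk eq_sym.
have Hk : 0 < n'.+1 by [].
apply: (@fill_ext E B f n'.+1 (horn n'.+1 k)); last first.
  exact: (@rlp_fill _ _ _ _ _ (Kan n'.+1 k Hk (ltn_ord k))).
move=> m s; apply: eq_existsb => i.
congr (_ && _).
have Hn := none i; rewrite /= in Hn.
case Si: (S i); rewrite Si /= in Hn.
  apply/eqP => /val_inj ik; by rewrite -ik Si in Sk.
exact: Hn.
Qed.

Lemma kan_ss (E B : sSet) (f : sSetMap E B) : KanFibration f -> SSFibration f.
Proof.
move=> Kan n p q n1 pq qn.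
have pn : p < n.+1 by lia.
have qn' : q < n.+1 by lia.
apply: fill_rlp.
apply: (@fill_ext E B f n (U n (fun i => (i == p) || (i == q)))); last first.
  apply: fill_U => //; last by lia.
    by exists (inord p); rewrite inordK // eqxx.
  pose k := if p != 0 then 0 else if q != 1 then 1 else 2.
  have kn : k < n.+1 by rewrite /k; case: (p != 0); case: (q != 1) => /=; lia.
  exists (inord k); rewrite inordK //.
  rewrite /k; have [p0|p0] := eqVneq p 0; have [q1|q1] := eqVneq q 1; rewrite ?p0 ?q1 /=; lia.
move=> m s; rewrite /U /rhombus.
apply/existsP/orP.
  case=> i /andP [/orP [/eqP <-|/eqP <-] Mi]; by [left | right].
case=> M; [exists (inord p) | exists (inord q)]; rewrite inordK // eqxx ?orbT //.
Qed.

Theorem mainTheorem3 :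
  (forall (E B : sSet) (f : sSetMap E B), KanFibration f -> SSFibration f) /\
  (forall S : sSet, KanComplex S -> SSComplex S).
Proof.
split; first exact: kan_ss.
by move=> S K; apply: kan_ss.
Qed.
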